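(* Let $\mathcal{X}$ be a set, let the side-information sets be constant, $\mathcal{X}_1=\mathcal{X}_2=\cdots=\mathcal{X}$ (independent of the history), and let $\mathcal{F}$ be a class of functions $\mathcal{X}\to[0,1]$. Then the following are equivalent: (i) the minimax regret is sublinear, i.e. $\frac1nV_n(\mathcal{F})\to0$ as $n\to\infty$; (ii) the sequential dimension $\mathrm{fat}_\beta(\mathcal{F},\mathcal{X})$ is finite for every $\beta>0$.
   Context: Logarithmic loss: $\ell(\hat y,y)=-\mathbf{1}\{y=1\}\log\hat y-\mathbf{1}\{y=0\}\log(1-\hat y)$. Minimax regret (with constant side-information set $\mathcal{X}$): $$V_n(\mathcal{F})=\sup_{x_1\in\mathcal{X}}\inf_{\hat y_1\in[0,1]}\sup_{p_1\in[0,1]}\mathbb{E}_{y_1\sim p_1}\cdots\sup_{x_n\in\mathcal{X}}\inf_{\hat y_n\in[0,1]}\sup_{p_n\in[0,1]}\mathbb{E}_{y_n\sim p_n}\Big[\sum_{t=1}^n\ell(\hat y_t,y_t)-\inf_{f\in\mathcal{F}}\sum_{t=1}^n\ell(f(x_t),y_t)\Big],$$ where $y_t\sim p_t$ is Bernoulli with $P(y_t=1)=p_t$. An $\mathcal{X}$-valued tree of depth $d$ is a sequence of maps $\mathbf{x}_t:\{0,1\}^{t-1}\to\mathcal{X}$, $t=1,\dots,d$, with $\mathbf{x}_t(y)=\mathbf{x}_t(y_1,\dots,y_{t-1})$. $\mathcal{F}$ shatters at scale $\beta>0$ an $\mathcal{X}$-valued tree $\mathbf{x}$ of depth $d$ if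 there is an $\mathbb{R}$-valued witness tree $\mathbf{s}$ of depth $d$ such that for every $y\in\{0,1\}^d$ there is $f\in\mathcal{F}$ with $(2y_t-1)(f(\mathbf{x}_t(y))-\mathbf{s}_t(y))\ge\beta/2$ for all $t=1,\dots,d$. The sequential fat-shattering dimension $\mathrm{fat}_\beta(\mathcal{F},\mathcal{X})$ is the largest depth of an $\mathcal{X}$-valued tree shattered by $\mathcal{F}$ at scale $\beta$. *)

(* Defs.v *)
From HB Require Import structures.
From mathcomp Require Import all_boot all_order all_algebra.
From mathcomp Require Import all_classical all_reals all_analysis.
Set Implicit Arguments. Unset Strict Implicit. Unset Printing Implicit Defensive.
Import Order.TTheory GRing.Theory Num.Theory.
Import numFieldNormedType.Exports.
Local Open Scope classical_set_scope.
Local Open Scope ring_scope.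

Section Defs.
Variables (R : realType) (X : Type).

Definition logloss (yhat : R) (y : bool) : \bar R :=
  if y then (if yhat == 0 then +oo%E else (- ln yhat)%:E)
  else (if yhat == 1 then +oo%E else (- ln (1 - yhat))%:E).

(* A history is the sequence of rounds (x_t, yhat_t, y_t). *)
Definition history := seq ((X * R) * bool).

Definition regret (F : set (X -> R)) (h : history) : \bar R :=
  let player := (\sum_(e <- h) logloss e.1.2 e.2)%E in
  let comp := ereal_inf [set (\sum_(e <- h) logloss (f e.1.1) e.2)%E | f in F] in
  if player == +oo%E then +oo%E else (player - comp)%E.

Fixpoint game_value (F : set (X -> R)) (k : nat) (h : history) : \bar R :=
  match k with
  | 0 => regret F h
  | k'.+1 =>
    ereal_sup [set
      ereal_inf [set
        ereal_sup [set
          (p%:E * game_value F k' (rcons h ((x, yhat), true))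
           + (1 - p)%:E * game_value F k' (rcons h ((x, yhat), false)))%E
          | p in `[0, 1]%classic]
        | yhat in `[0, 1]%classic]
      | x in [set: X]]
  end.

Definition minimax_regret (F : set (X -> R)) (n : nat) : \bar R :=
  game_value F n [::].

(* An X-valued (resp. R-valued) tree of depth d is represented by a map on
   binary prefixes: x_t(y_1..y_{t-1}) = x (take (t-1) y).  Only prefixes of
   length < d are relevant. *)
Definition shatters (F : set (X -> R)) (beta : R) (d : nat)
    (x : seq bool -> X) : Prop :=
  exists s : seq bool -> R,
    forall y : seq bool, size y = d ->
      exists f, F f /\
        forall t : nat, (t < d)%N ->
          beta / 2 <= (2 * ((nth false y t : nat)%:R) - 1)
                       * (f (x (take t y)) - s (take t y)).

Definition seq_fat (F : set (X -> R)) (beta : R) : \bar R :=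
  ereal_sup [set (d%:R)%:E | d in [set d : nat | exists x, shatters F beta d x]].

End Defs.

(* Main.v *)
Require Import Defs.
From HB Require Import structures.
From mathcomp Require Import all_boot all_order all_algebra.
From mathcomp Require Import all_classical all_reals all_analysis.
From mathcomp Require Import lra ring zify.
Set Implicit Arguments. Unset Strict Implicit. Unset Printing Implicit Defensive.
Import Order.TTheory GRing.Theory Num.Theory.
Import numFieldNormedType.Exports.
Local Open Scope classical_set_scope.
Local Open Scope ring_scope.

Section Game.
Variables (R : realType) (X : Type) (F : set (X -> R)).
Local Notation entry := ((X * R) * bool)%type.
Local Notation hist := (history R X).

Definition consP (P : hist -> entry -> Prop) (h : hist) :=
  forall h1 e h2, h = h1 ++ e :: h2 -> P h1 e.

Lemma consP_rcons P h e : consP P (rcons h e) <-> consP P h /\ P h e.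
Proof.
split.
  move=> H; split; last by apply: (H h e [::]); rewrite cats1.
  by move=> h1 e' h2 hE; apply: (H h1 e' (rcons h2 e)); rewrite hE rcons_cat.
case=> H He h1 e' h2; case/lastP: h2 => [|h2 z].
  by rewrite cats1 => /rcons_inj [hE eE]; rewrite -hE -eE.
rewrite -rcons_cons -rcons_cat => /rcons_inj [hE _]; exact: (H _ _ _ hE).
Qed.

Lemma conv_le (p : R) (a b : \bar R) (B : R) : 0 <= p <= 1 ->
  (a <= B%:E)%E -> (b <= B%:E)%E -> (p%:E * a + (1 - p)%:E * b <= B%:E)%E.
Proof.
case/andP=> p0 p1 aB bB.
apply: (@le_trans _ _ (p%:E * B%:E + (1 - p)%:E * B%:E)%E).
  apply: leeD; apply: lee_wpmul2l => //; rewrite lee_fin ?subr_ge0 //.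
by rewrite -!EFinM -EFinD lee_fin; lra.
Qed.

Lemma game_ub (sigma : hist -> X -> R) (B : R) :
  (forall h x, 0 <= sigma h x <= 1) ->
  forall k h, consP (fun h1 e => e.1.2 = sigma h1 e.1.1) h ->
  (forall h', size h' = k -> consP (fun h1 e => e.1.2 = sigma h1 e.1.1) (h ++ h') ->
     (regret F (h ++ h') <= B%:E)%E) ->
  (game_value F k h <= B%:E)%E.
Proof.
move=> s01; elim=> [|k IH] h hc0 H /=.
  by have := H [::] erefl; rewrite cats0; apply.
apply: ge_ereal_sup => _ [x _ <-].
apply: (@le_trans _ _ (ereal_sup [set (p%:E * game_value F k (rcons h (x, sigma h x, true))
   + (1 - p)%:E * game_value F k (rcons h (x, sigma h x, false)))%E | p in `[0, 1]%classic])).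
  apply: ereal_inf_lbound; exists (sigma h x) => //.
  by rewrite /= in_itv /=; apply: s01.
apply: ge_ereal_sup => _ [p /= p01 <-].
have Hb : forall b, (game_value F k (rcons h (x, sigma h x, b)) <= B%:E)%E.
  move=> b; apply: IH; first by apply/consP_rcons.
  move=> h' sz hc; rewrite cat_rcons; apply: H; first by rewrite /= sz.
  by rewrite -cat_rcons.
apply: conv_le => //; by move: p01; rewrite in_itv.
Qed.

Lemma game_lb (alpha : hist -> X) (yf : hist -> R -> bool) (B : \bar R) :
  forall k h,
  consP (fun h1 e => [/\ e.1.1 = alpha h1, e.2 = yf h1 e.1.2 & 0 <= e.1.2 <= 1]) h ->
  (forall h', size h' = k ->
     consP (fun h1 e => [/\ e.1.1 = alpha h1, e.2 = yf h1 e.1.2 & 0 <= e.1.2 <= 1]) (h ++ h') ->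
     (B <= regret F (h ++ h'))%E) ->
  (B <= game_value F k h)%E.
Proof.
elim=> [|k IH] h hc0 H /=.
  by have := H [::] erefl; rewrite cats0; apply.
apply: le_trans; last by apply: ereal_sup_ubound; exists (alpha h).
apply: le_ereal_inf_tmp => _ [yh /= yh01 <-].
move: yh01; rewrite in_itv /= => yh01.
apply: le_trans; last first.
  apply: ereal_sup_ubound; exists (if yf h yh then 1 else 0) => //=.
  by rewrite in_itv /=; case: (yf h yh) => //; rewrite lexx ler01.
have Hb : (B <= game_value F k (rcons h (alpha h, yh, yf h yh)))%E.
  apply: IH; first by apply/consP_rcons.
  move=> h' sz hc; rewrite cat_rcons; apply: H; first by rewrite /= sz.
  by rewrite -cat_rcons.
case: (yf h yh) Hb => Hb /=.
  by rewrite subrr mul0e adde0 mul1e.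
by rewrite mul0e add0e subr0 mul1e.
Qed.


Definition Pr (yh : R) (y : bool) : R := if y then yh else 1 - yh.
Definition Lf (f : X -> R) (h : hist) := (\sum_(e <- h) logloss (f e.1.1) e.2)%E.
Definition player (h : hist) := (\sum_(e <- h) logloss e.1.2 e.2)%E.

Lemma logloss_Pr (yh : R) y : 0 < yh < 1 -> logloss yh y = (- ln (Pr yh y))%:E.
Proof.
case/andP=> h0 h1; rewrite /logloss /Pr; case: y.
  by rewrite gt_eqF.
by rewrite lt_eqF.
Qed.

Lemma logloss_ge0 (v : R) y : 0 <= v <= 1 -> (0 <= logloss v y)%E.
Proof.
case/andP=> v0 v1; rewrite /logloss; case: y.
  case: eqP => // _; rewrite lee_fin oppr_ge0; exact: ln_le0.
case: eqP => // _; rewrite lee_fin oppr_ge0; apply: ln_le0; lra.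
Qed.

Lemma regret_ub (h : hist) (P B : R) : player h = P%:E ->
  (forall f, F f -> ((P - B)%:E <= Lf f h)%E) -> (regret F h <= B%:E)%E.
Proof.
move=> hP Hf; rewrite /regret -/(player h) hP /=.
have : ((P - B)%:E <= ereal_inf [set Lf f h | f in F])%E.
  by apply: le_ereal_inf_tmp => _ [f Ff <-]; apply: Hf.
rewrite /Lf; case: (ereal_inf _) => [c| |] //=.
  by rewrite !lee_fin => ?; lra.
by rewrite leNye.
Qed.

Lemma lee_sum_hist (h : hist) (G H : entry -> \bar R) :
  (forall h1 e h2, h = h1 ++ e :: h2 -> (G e <= H e)%E) ->
  (\sum_(e <- h) G e <= \sum_(e <- h) H e)%E.
Proof.
elim: h => [|e h IH] Hh; first by rewrite !big_nil.
rewrite !big_cons; apply: leeD; first by apply: (Hh [::] e h).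
by apply: IH => h1 e' h2 hE; apply: (Hh (e :: h1) e' h2); rewrite hE.
Qed.

Lemma regret_lb (h : hist) (B : R) f :
  (forall g, F g -> forall x, 0 <= g x <= 1) -> F f ->
  (forall h1 e h2, h = h1 ++ e :: h2 -> 0 <= e.1.2 <= 1) ->
  (B%:E + Lf f h <= player h)%E -> (B%:E <= regret F h)%E.
Proof.
move=> hF01 Ff h01 HB.
have Lg0 : forall g, F g -> (0 <= Lf g h)%E.
  move=> g Fg; apply: sume_ge0 => e _; exact: logloss_ge0 (hF01 _ Fg _).
have P0 : (0 <= player h)%E.
  have := @lee_sum_hist h (fun _ => 0%E) (fun e => logloss e.1.2 e.2).
  rewrite big1 // => -> // h1 e h2 hE; apply: logloss_ge0; exact: h01 hE.
rewrite /regret -/(player h).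
case: ifP => [_|/eqP Pfin]; first by rewrite leey.
have hinf : (ereal_inf [set Lf g h | g in F] <= Lf f h)%E.
  by apply: ereal_inf_lbound; exists f.
have hinf0 : (0 <= ereal_inf [set Lf g h | g in F])%E.
  by apply: le_ereal_inf_tmp => _ [g Fg <-]; apply: Lg0.
move: HB hinf hinf0 (Lg0 f Ff) P0 Pfin; rewrite /Lf.
case: (player h) => [p| |] //; case: (ereal_inf _) => [c| |] //;
  case: (\sum_(e <- h) _)%E => [l| |] //=; rewrite ?lee_fin => *; lra.
Qed.


Lemma shat_mono (V W : set (X -> R)) b d x : V `<=` W -> shatters V b d x -> shatters W b d x.
Proof.
move=> VW [s Hs]; exists s => y sy; have [f [Vf Hf]] := Hs y sy.
by exists f; split => //; apply: VW.
Qed.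

Lemma shat_prune (V : set (X -> R)) b d m x : shatters V b d x -> (m <= d)%N -> shatters V b m x.
Proof.
move=> [s Hs] md; exists s => y sy.
have := Hs (y ++ nseq (d - m) false); rewrite size_cat size_nseq sy subnKC //.
case=> // f [Vf Hf].
exists f; split => // t tm.
have := Hf t (leq_trans tm md).
by rewrite nth_cat sy tm takel_cat // sy ltnW.
Qed.

Lemma shat_comb (V : set (X -> R)) b m (x0 : X) (r : R) x1 x2 :
  shatters [set g | V g /\ r + b / 2 <= g x0] b m x1 ->
  shatters [set g | V g /\ g x0 <= r - b / 2] b m x2 ->
  shatters V b m.+1 (fun y => if y is c :: y' then (if c then x1 y' else x2 y') else x0).
Proof.
move=> [s1 H1] [s2 H2].
exists (fun y => if y is c :: y' then (if c then s1 y' else s2 y') else r).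
case=> [//|c y] /= [sy].
case: c.
  have [f [[Vf fr] Hf]] := H1 y sy; exists f; split => //.
  case=> [_|t] /=; first by move: fr; rewrite /= mulr1n; lra.
  by rewrite ltnS; apply: Hf.
have [f [[Vf fr] Hf]] := H2 y sy; exists f; split => //.
case=> [_|t] /=; first by rewrite mulr0 sub0r mulN1r; lra.
by rewrite ltnS; apply: Hf.
Qed.

Lemma fat_fin b : (seq_fat F b < +oo)%E ->
  exists d, forall m x, shatters F b m x -> (m <= d)%N.
Proof.
rewrite /seq_fat; set S := ereal_sup _ => Sfin.
have ub : forall m x, shatters F b m x -> ((m%:R)%:E <= S)%E.
  by move=> m x hs; apply: ereal_sup_ubound; exists m => //; exists x.
move: Sfin ub; case: S => [r| |] // _ ub.
  exists (Num.Def.archi_bound `|r|) => m x hs.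
  have := ub m x hs; rewrite lee_fin => mr.
  have := archi_boundP (normr_ge0 r) => hr.
  rewrite -(ler_nat R); apply: ltW; apply: (le_lt_trans mr).
  by apply: le_lt_trans hr; apply: ler_norm.
by exists 0%N => m x hs; have := ub m x hs; rewrite leeNy_eq.
Qed.

Lemma fat_inf b : ~ (seq_fat F b < +oo)%E ->
  forall n, exists x, shatters F b n x.
Proof.
move=> Hinf n; apply: contrapT => Hn; apply: Hinf.
apply: (@le_lt_trans _ _ (n%:R)%:E); last by apply: ltry.
apply: ge_ereal_sup => _ [m [x hs] <-]; rewrite lee_fin ler_nat.
rewrite leqNgt; apply/negP => nm; apply: Hn; exists x.
by apply: shat_prune hs (ltnW nm).
Qed.


Lemma round_lb (b yh v s : R) : 0 < b -> 0 <= yh <= 1 -> 0 <= v <= 1 ->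
  b / 2 <= (2 * (((yh <= s)%R : nat)%:R) - 1) * (v - s) ->
  ((ln (1 + b / 2))%:E + logloss v (yh <= s)%R <= logloss yh (yh <= s)%R)%E.
Proof.
move=> b0 /andP[yh0 yh1] /andP[v0 v1]; rewrite /logloss.
case: (leP yh s) => [ys|sy] /=.
  rewrite mulr1n => H.
  have vn0 : v != 0 by apply/eqP => v0'; move: H; rewrite v0'; lra.
  case: ifP => [/eqP v0'|_]; first by move: vn0; rewrite v0' eqxx.
  case: ifP => [_|/negbT yhn0]; first by rewrite leey.
  rewrite -EFinD lee_fin.
  have yhp : 0 < yh by rewrite lt_neqAle eq_sym yhn0.
  have vp : 0 < v by rewrite lt_neqAle eq_sym vn0.
  have bp : 0 < 1 + b / 2 by lra.
  suff : ln yh + ln (1 + b/2) <= ln v by lra.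
  rewrite -lnM ?posrE // ler_ln ?posrE ?mulr_gt0 //; nra.
rewrite mulr0n => H.
have vn1 : v != 1 by apply/eqP => v1'; move: H; rewrite v1'; lra.
case: ifP => [/eqP v1'|_]; first by move: vn1; rewrite v1' eqxx.
case: ifP => [_|/negbT yhn1]; first by rewrite leey.
rewrite -EFinD lee_fin.
have yhp : 0 < 1 - yh by rewrite subr_gt0 lt_neqAle yhn1.
have vp : 0 < 1 - v by rewrite subr_gt0 lt_neqAle vn1.
have bp : 0 < 1 + b / 2 by lra.
suff : ln (1 - yh) + ln (1 + b/2) <= ln (1 - v) by lra.
rewrite -lnM ?posrE // ler_ln ?posrE ?mulr_gt0 //; nra.
Qed.

Lemma sum_const_plus (h : hist) (c : R) (G : entry -> \bar R) :
  (\sum_(e <- h) (c%:E + G e) = ((size h)%:R * c)%:E + \sum_(e <- h) G e)%E.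
Proof.
elim: h => [|e h IH]; first by rewrite !big_nil /= mul0r add0e.
rewrite !big_cons IH addeACA -EFinD /=; congr (_ + _)%E; congr (_%:E); rewrite -addn1 natrD mulrDl mul1r addrC. reflexivity.
Qed.

Lemma fat_lb b (x0 : X) : 0 < b -> (forall g, F g -> forall x, 0 <= g x <= 1) ->
  (forall n, exists x, shatters F b n x) ->
  forall n, (((n%:R * ln (1 + b / 2)))%:E <= minimax_regret F n)%E.
Proof.
move=> b0 hF01 Hsh n; have [xt [s Hs]] := Hsh n.
pose sn (h : hist) := [seq e.2 | e <- h].
apply: (@game_lb (fun h => xt (sn h)) (fun h yh => yh <= s (sn h))).
  by move=> [|? ?] ? ?.
move=> h' sz /= hc.
have : size (sn h') = n by rewrite size_map.
move/Hs => [f [Ff Hf]].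
apply: (@regret_lb _ _ f hF01 Ff); first by move=> h1 e h2 /hc [].
rewrite /Lf /player -sz -sum_const_plus; apply: lee_sum_hist => h1 e h2 hE.
have [ex ey e01] := hc h1 e h2 hE.
have szh1 : (size h1 < n)%N by rewrite -sz hE size_cat /= addnS ltnS leq_addr.
have := Hf (size h1) szh1.
rewrite /sn hE map_cat take_size_cat ?size_map // nth_cat size_map ltnn subnn /=.
rewrite -/(sn h1) -ex ey => H.
by apply: round_lb => //; apply: hF01.
Qed.

End Game.

Section SOA.
Variables (R : realType) (X : Type) (F : set (X -> R)) (x0 : X).
Variables (K d : nat).
Hypothesis K0 : (0 < K)%N.
Let b : R := 2 / K%:R.
Hypothesis hd : forall m x, shatters F b m x -> (m <= d)%N.

Lemma b2E : b / 2 = K%:R^-1.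
Proof. by rewrite /b mulrAC divff ?mul1r // pnatr_eq0. Qed.

Lemma Kpos : 0 < (K%:R : R).
Proof. by rewrite ltr0n. Qed.

Definition shat (V : set (X -> R)) m := exists x, shatters V b m x.
Definition mu (V : set (X -> R)) := find (fun m => ~~ `[< shat V m >]) (iota 0 d.+2).

Lemma mu_lt V : V `<=` F -> (mu V < d.+2)%N.
Proof.
move=> VF; rewrite /mu {2}(_ : d.+2 = size (iota 0 d.+2)); last by rewrite size_iota.
rewrite -has_find.
apply/hasP; exists d.+1; first by rewrite mem_iota add0n leq0n ltnSn.
apply/negP => /asboolP [x hs]; have := hd (shat_mono VF hs); by rewrite ltnn.
Qed.

Lemma shatE V m : V `<=` F -> shat V m <-> (m < mu V)%N.
Proof.
move=> VF; split.
  case=> x hs; rewrite ltnNge; apply/negP => mum.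
  have hm : (m <= d)%N by apply: hd x (shat_mono VF hs).
  have := @nth_find _ 0%N (fun m => ~~ `[< shat V m >]) (iota 0 d.+2).
  rewrite has_find size_iota mu_lt // nth_iota ?mu_lt // add0n => /(_ isT) /negP; apply.
  by apply/asboolP; exists x; apply: shat_prune hs mum.
move=> mlt; have := before_find 0%N mlt; rewrite nth_iota; last first.
  by apply: leq_trans mlt (ltnW (mu_lt VF)).
by rewrite add0n => /negbFE /asboolP.
Qed.

Lemma mu_gt0 V f : V `<=` F -> V f -> (0 < mu V)%N.
Proof.
move=> VF Vf; apply/(shatE 0 VF); exists (fun _ => x0); exists (fun _ => 0) => y _.
by exists f; split.
Qed.

Definition up (V : set (X -> R)) x r := [set g | V g /\ r + b / 2 <= g x].
Definition dn (V : set (X -> R)) x r := [set g | V g /\ g x <= r - b / 2].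
Definition inA V x (j : nat) : bool := (mu V <= mu (up V x (j%:R / K%:R)))%N.
Definition jmax V x : nat := \big[maxn/0%N]_(j < K.+1 | inA V x j) (j : nat).
Definition soa V x : R := (jmax V x)%:R / K%:R.

Lemma jmax_le V x : (jmax V x <= K)%N.
Proof. by apply/bigmax_leqP => i _; rewrite -ltnS. Qed.

Lemma soa01 V x : 0 <= soa V x <= 1.
Proof.
rewrite /soa divr_ge0 ?ler0n //= ler_pdivrMr ?Kpos // mul1r ler_nat.
exact: jmax_le.
Qed.

Definition stepV (o : option bool) V x :=
  match o with
  | None => V
  | Some true => up V x (soa V x + b / 2)
  | Some false => dn V x (soa V x)
  end.

Lemma stepV_sub o V x : stepV o V x `<=` V.
Proof. by case: o => [[]|] //= g []. Qed.

Definition idir (f : X -> R) V x : option bool :=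
  if soa V x + b <= f x then Some true
  else if f x <= soa V x - b then Some false else None.

Lemma key f V x c : V `<=` F -> V f -> (forall x, 0 <= f x <= 1) ->
  idir f V x = Some c ->
  stepV (Some c) V x f /\ (mu (stepV (Some c) V x) < mu V)%N.
Proof.
move=> VF Vf f01; rewrite /idir.
have bE : b = 2 / K%:R by [].
have b2 := b2E.
have Kp := Kpos.
have bp : 0 < b by rewrite bE divr_gt0.
case: ifP => [hup [<-]|_].
  split; first by split => //; lra.
  have jK : (jmax V x < K)%N.
    rewrite ltn_neqAle jmax_le andbT; apply/eqP => jE.
    move: hup; rewrite /soa jE divff ?gt_eqF //.
    have := f01 x; have : 0 < b by rewrite bE divr_gt0. lra.
  rewrite ltnNge; apply/negP => hA.
  have : inA V x (jmax V x).+1.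
    rewrite /inA; suff -> : (jmax V x).+1%:R / K%:R = soa V x + b / 2 by [].
    by rewrite /soa b2 -natr1 mulrDl mul1r.
  move=> hA'; have := @leq_bigmax_cond _ (fun j : 'I_K.+1 => inA V x j) (fun j : 'I_K.+1 => (j : nat)) (Ordinal (jK : ((jmax V x).+1 < K.+1)%N)) hA'.
  by rewrite -/(jmax V x) /= ltnn.
case: ifP => // hdn [<-]; split; first by split => //; lra.
have hex : exists j : 'I_K.+1, inA V x j.
  apply/existsP; apply: contraT; rewrite negb_exists => /forallP hn.
  have : jmax V x = 0%N by apply/eqP; rewrite -leqn0; apply/bigmax_leqP => i /(negP (hn i)).
  move=> j0; move: hdn; rewrite /soa j0 mul0r sub0r.
  have := f01 x; have : 0 < b by rewrite bE divr_gt0. lra.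
case: hex => j0 hj0.
have hA : inA V x (jmax V x).
  rewrite /jmax (bigop.bigmax_eq_arg j0) //.
  by case: arg_maxnP.
rewrite ltnNge; apply/negP => hB.
have mu0 := mu_gt0 VF Vf.
have hp : ((mu V).-1 < mu V)%N by rewrite ltn_predL.
have hUF : up V x (soa V x) `<=` F by move=> g [/VF].
have hDF : dn V x (soa V x) `<=` F by move=> g [/VF].
have : shat V (mu V) .
  have := (shatE (mu V).-1 hUF).2; rewrite /inA in hA; rewrite -/(soa V x) in hA.
  move/(_ (leq_trans hp hA)) => [x1 h1].
  have := (shatE (mu V).-1 hDF).2 (leq_trans hp hB) => [[x2 h2]].
  exists (fun y => if y is c :: y' then (if c then x1 y' else x2 y') else x).
  by rewrite -(ltn_predK mu0); apply: shat_comb h1 h2.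
by move/(shatE _ VF); rewrite ltnn.
Qed.


Variables (n : nat) (eps : R).
Hypothesis eps0 : 0 < eps.
Hypothesis eps1 : 4 * eps <= 1.
Local Notation hist := (history R X).
Local Notation entry := ((X * R) * bool)%type.
Let e0 : entry := ((x0, 0), false).

Definition E := {ffun 'I_d.+1 -> option ('I_n.+1 * bool)}.

Definition edir (D : E) (t : nat) : option bool :=
  if [exists j, if D j is Some p then (val p.1 == t) && p.2 else false] then Some true
  else if [exists j, if D j is Some p then (val p.1 == t) && ~~ p.2 else false] then Some false
  else None.

Definition runS (D : E) (h : hist) :=
  foldl (fun st e => (st.1.+1, stepV (edir D st.1) st.2 e.1.1)) (0%N, F) h.
Definition runV D h := (runS D h).2.

Lemma runS1 D h : (runS D h).1 = size h.
Proof. by elim/last_ind: h => [|h e IH] //; rewrite /runS foldl_rcons /= -/(runS D h) IH size_rcons. Qed.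

Lemma runV_rcons D h e : runV D (rcons h e) = stepV (edir D (size h)) (runV D h) e.1.1.
Proof. by rewrite /runV /runS foldl_rcons /= -/(runS D h) runS1. Qed.

Definition epred D h x := eps + (1 - 2 * eps) * soa (runV D h) x.

Definition W D (h : hist) := \prod_(k < size h) Pr (epred D (take k h) (nth e0 h k).1.1) (nth e0 h k).2.

Lemma W_rcons D h e : W D (rcons h e) = W D h * Pr (epred D h e.1.1) e.2.
Proof.
rewrite /W size_rcons big_ord_recr /= nth_rcons ltnn eqxx -cats1 take_size_cat //.
congr (_ * _); apply: eq_bigr => i _.
by rewrite takel_cat ?nth_cat ?ltn_ord // ltnW.
Qed.

Lemma Pr_bnd p y : eps <= p <= 1 - eps -> eps <= Pr p y <= 1 - eps.
Proof. by rewrite /Pr; case: y => // /andP[h1 h2]; apply/andP; split; lra. Qed.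

Lemma epred_bnd D h x : eps <= epred D h x <= 1 - eps.
Proof. have E0 := eps0; have E1 := eps1; rewrite /epred; have /andP[s0 s1] := soa01 (runV D h) x. have e2 : 0 <= 1 - 2 * eps by lra.
have s2 : 0 <= 1 - soa (runV D h) x by rewrite subr_ge0.
apply/andP; split; [have := mulr_ge0 e2 s0 | have := mulr_ge0 e2 s2]; lra. Qed.

Lemma W_gt0 D h : 0 < W D h.
Proof.
have E0 := eps0.
apply: prodr_gt0 => i _; have := Pr_bnd (nth e0 h i).2 (epred_bnd D (take i h) (nth e0 h i).1.1).
lra.
Qed.

Definition S (h : hist) := \sum_(D : E) W D h.

Lemma S_gt0 h : 0 < S h.
Proof.
rewrite /S (bigD1 [ffun => None]) //=; apply: ltr_pwDl; first exact: W_gt0.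
by apply: sumr_ge0 => D _; apply: ltW; apply: W_gt0.
Qed.

Lemma W_le_S D h : W D h <= S h.
Proof.
rewrite /S (bigD1 D) //= lerDl; apply: sumr_ge0 => D' _; apply: ltW; apply: W_gt0.
Qed.

Definition sigma h x := (\sum_(D : E) W D h * epred D h x) / S h.

Lemma sigma_bnd h x : eps <= sigma h x <= 1 - eps.
Proof.
have Sp := S_gt0 h.
rewrite /sigma ler_pdivlMr // ler_pdivrMr // /S mulr_sumr mulr_sumr; apply/andP; split.
  by apply: ler_sum => D _; rewrite mulrC; apply: ler_wpM2l; [apply: ltW; apply: W_gt0| case/andP: (epred_bnd D h x)].
apply: ler_sum => D _; rewrite [X in _ <= X]mulrC; apply: ler_wpM2l; first by apply: ltW; apply: W_gt0.
by case/andP: (epred_bnd D h x).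
Qed.

Lemma Pr_sigma h x yh y : Pr (sigma h x) y = S (rcons h ((x, yh), y)) / S h.
Proof.
have Sp := S_gt0 h.
rewrite /S; under eq_bigr => D _ do rewrite W_rcons /=.
rewrite /Pr /sigma -/(S h); case: y.
  by [].
apply: (@mulIf _ (S h)); first by rewrite gt_eqF.
rewrite mulrBl mul1r divfK ?gt_eqF // divfK ?gt_eqF //.
by rewrite /S -sumrB; apply: eq_bigr => D _; rewrite mulrBr mulr1.
Qed.


Lemma player_eq h : consP (fun h1 e => e.1.2 = sigma h1 e.1.1) h ->
  player h = (ln (#|{: E}|%:R) - ln (S h))%:E.
Proof.
elim/last_ind: h => [|h e IH].
  move=> _; rewrite /player big_nil /S.
  under eq_bigr do rewrite /W big_ord0.
  by rewrite sumr_const subrr.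
move/consP_rcons => [/IH hP he].
rewrite /player big_rcons /= -/(player h) hP.
case: e he => [[x yh] y] /= ->.
have Sp := S_gt0 h.
have Sp' := S_gt0 (rcons h (x, sigma h x, y)).
have := sigma_bnd h x => /andP[s0 s1].
have E0 := eps0; have E1 := eps1.
rewrite logloss_Pr; last by apply/andP; split; lra.
rewrite (Pr_sigma h x (sigma h x)) ln_div ?posrE // -EFinD; congr (_%:E); lra.
Qed.

Definition iV f (h : hist) := foldl (fun V e => stepV (idir f V e.1.1) V e.1.1) F h.

Lemma iV_rcons f h e : iV f (rcons h e) = stepV (idir f (iV f h) e.1.1) (iV f h) e.1.1.
Proof. by rewrite /iV foldl_rcons. Qed.

Lemma take_rcons' (h : hist) e k : (k <= size h)%N -> take k (rcons h e) = take k h.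
Proof. by move=> kh; rewrite -cats1 takel_cat. Qed.

Lemma nth_rcons' (h : hist) e k : (k < size h)%N -> nth e0 (rcons h e) k = nth e0 h k.
Proof. by move=> kh; rewrite nth_rcons kh. Qed.

Definition idirs f (h : hist) k := idir f (iV f (take k h)) (nth e0 h k).1.1.

Lemma idirs_rcons f h e k : (k < size h)%N -> idirs f (rcons h e) k = idirs f h k.
Proof. by move=> kh; rewrite /idirs take_rcons' ?nth_rcons' // ltnW. Qed.

Lemma idirs_last f h e : idirs f (rcons h e) (size h) = idir f (iV f h) e.1.1.
Proof. by rewrite /idirs take_rcons' // take_size nth_rcons ltnn eqxx. Qed.

Definition mist f (h : hist) := count (fun k => idirs f h k != None) (iota 0 (size h)).

Lemma mist_rcons f h e : mist f (rcons h e) = (mist f h + (idir f (iV f h) e.1.1 != None))%N.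
Proof.
rewrite /mist size_rcons -addn1 iotaD count_cat /= add0n idirs_last addn0.
congr (_ + _)%N; apply: eq_in_count => k; rewrite mem_iota add0n => /andP[_ kh].
by rewrite idirs_rcons.
Qed.

Lemma inv f h : F f -> (forall x, 0 <= f x <= 1) ->
  [/\ iV f h f, iV f h `<=` F & (mist f h + mu (iV f h) <= mu F)%N].
Proof.
move=> Ff f01; elim/last_ind: h => [|h e [Vf VF Hm]]; first by split.
rewrite iV_rcons mist_rcons.
case hid: (idir f (iV f h) e.1.1) => [c|] /=.
  have [Sf Smu] := key VF Vf f01 hid.
  split => //; first by move=> g hg; apply: VF; case: c hid Sf Smu hg => _ _ _ [].
  by rewrite addn1 addSn; apply: leq_trans Hm; rewrite ltn_add2l.
by rewrite addn0.
Qed.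

Lemma mist_le f h : F f -> (forall x, 0 <= f x <= 1) -> (mist f h <= d)%N.
Proof.
move=> Ff f01; have [Vf VF Hm] := inv h Ff f01.
have m0 := mu_gt0 VF Vf.
have mF := mu_lt (@subset_refl _ F).
rewrite ltnS in mF; move: m0 mF Hm; lia.
Qed.

Definition follows (D : E) f (h : hist) := forall k, (k < size h)%N -> edir D k = idirs f h k.

Lemma follows_rcons D f h e : follows D f (rcons h e) ->
  follows D f h /\ edir D (size h) = idir f (iV f h) e.1.1.
Proof.
move=> Hf; split; last by rewrite Hf ?size_rcons // idirs_last.
by move=> k kh; rewrite Hf ?size_rcons ?ltnS 1?ltnW // idirs_rcons.
Qed.

Lemma run_eq D f h : follows D f h -> runV D h = iV f h.
Proof.
elim/last_ind: h => [|h e IH] //.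
by move/follows_rcons => [/IH Hr He]; rewrite runV_rcons iV_rcons He Hr.
Qed.


Hypothesis hbe : 2 / K%:R <= eps.
Let c1 := - ln (1 - 2 * eps).
Let c2 := - ln eps.

Lemma c1_ge0 : 0 <= c1.
Proof. have E0 := eps0; rewrite /c1 oppr_ge0; apply: ln_le0; lra. Qed.

Lemma c2_ge0 : 0 <= c2.
Proof. have E0 := eps0; have E1 := eps1; rewrite /c2 oppr_ge0; apply: ln_le0; lra. Qed.

Lemma round_ub_far (e v : R) y : eps <= e <= 1 - eps -> 0 <= v <= 1 ->
  ((- ln (Pr e y) - c1 - c2)%:E <= logloss v y)%E.
Proof.
move=> he hv; apply: (@le_trans _ _ 0%E); last exact: logloss_ge0.
have E0 := eps0; have := Pr_bnd y he => /andP[p0 p1].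
have := c1_ge0; rewrite lee_fin /c2.
have : ln eps <= ln (Pr e y) by rewrite ler_ln ?posrE //; lra.
lra.
Qed.

Lemma round_ub_close (yh v : R) y : 0 <= yh <= 1 -> 0 <= v <= 1 -> yh - b < v < yh + b ->
  ((- ln (Pr (eps + (1 - 2 * eps) * yh) y) - c1)%:E <= logloss v y)%E.
Proof.
move=> /andP[y0 y1] /andP[v0 v1] /andP[vl vu].
have E0 := eps0; have E1 := eps1; have hb := hbe; rewrite -/b in hb.
have e2 : 0 < 1 - 2 * eps by lra.
have t1 : (1 - 2 * eps) * (v - yh) <= eps.
  case: (lerP (v - yh) 0) => hv; nra.
have t2 : (1 - 2 * eps) * (yh - v) <= eps.
  case: (lerP (yh - v) 0) => hv; nra.
have ep : 0 < eps + (1 - 2 * eps) * yh by nra.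
have ep' : 0 < 1 - (eps + (1 - 2 * eps) * yh) by nra.
rewrite /logloss /Pr /c1; case: y.
  case: ifP => [_|/negbT vn0]; first by rewrite leey.
  have vp : 0 < v by rewrite lt_neqAle eq_sym vn0.
  rewrite lee_fin.
  suff : ln v + ln (1 - 2 * eps) <= ln (eps + (1 - 2 * eps) * yh) by lra.
  rewrite -lnM ?posrE // ler_ln ?posrE ?mulr_gt0 //; nra.
case: ifP => [_|/negbT vn1]; first by rewrite leey.
have vp : 0 < 1 - v by rewrite subr_gt0 lt_neqAle vn1.
rewrite lee_fin.
suff : ln (1 - v) + ln (1 - 2 * eps) <= ln (1 - (eps + (1 - 2 * eps) * yh)) by lra.
rewrite -lnM ?posrE // ler_ln ?posrE ?mulr_gt0 //; nra.
Qed.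


Lemma expert_bound D f h : F f -> (forall x, 0 <= f x <= 1) -> follows D f h ->
  ((- ln (W D h) - c1 * (size h)%:R - c2 * (mist f h)%:R)%:E <= Lf f h)%E.
Proof.
move=> Ff f01; elim/last_ind: h => [|h e IH].
  by move=> _; rewrite /W /Lf big_ord0 big_nil ln1 /mist /= !mulr0 !subr0 oppr0.
move=> Hfo; have [/IH IH' He] := follows_rcons Hfo.
have Hr := run_eq (follows_rcons Hfo).1.
rewrite W_rcons /Lf big_rcons /= -/(Lf f h) mist_rcons size_rcons lnM ?posrE; last 2 first.
- exact: W_gt0.
- by have := Pr_bnd e.2 (epred_bnd D h e.1.1); have E0 := eps0; lra.
set o := idir f (iV f h) e.1.1.
have -> : (- (ln (W D h) + ln (Pr (epred D h e.1.1) e.2)) - c1 * (size h).+1%:R -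
   c2 * (mist f h + (o != None))%N%:R) =
   (- ln (W D h) - c1 * (size h)%:R - c2 * (mist f h)%:R) +
   (- ln (Pr (epred D h e.1.1) e.2) - c1 - c2 * (o != None)%:R).
  by rewrite natrD -addn1 natrD; ring.
rewrite EFinD; apply: leeD => //.
rewrite /epred Hr.
have hv := f01 e.1.1.
case ho : o => [c|] /=.
  rewrite mulr1; apply: round_ub_far => //.
  by have := epred_bnd D h e.1.1; rewrite /epred Hr.
rewrite mulr0 subr0; apply: round_ub_close => //; first exact: soa01.
move: ho; rewrite /o /idir.
case: ifP => // /negbT; rewrite -ltNge => h1.
case: ifP => // /negbT; rewrite -ltNge => h2 _.
by rewrite /b h2 h1.
Qed.


Lemma cover f h : F f -> (forall x, 0 <= f x <= 1) -> size h = n ->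
  exists D : E, follows D f h.
Proof.
move=> Ff f01 sz.
pose s := [seq k <- iota 0 n | idirs f h k != None].
have ss : (size s <= d)%N by rewrite size_filter -sz; apply: mist_le.
pose D : E := [ffun j : 'I_d.+1 => if (j < size s)%N then
   Some (inord (nth 0%N s j), odflt false (idirs f h (nth 0%N s j))) else None].
have Hs : forall j : 'I_d.+1, forall p, D j = Some p ->
   [/\ val p.1 = nth 0%N s j, p.2 = odflt false (idirs f h (nth 0%N s j)),
       idirs f h (nth 0%N s j) != None & (nth 0%N s j < n)%N].
  move=> j p; rewrite ffunE; case: ifP => // js [<-] /=.
  have : nth 0%N s j \in s by apply: mem_nth.
  rewrite mem_filter mem_iota add0n => /andP[hn /andP[_ hlt]].
  by split => //; rewrite inordK // ltnS ltnW.
have Hin : forall k c, (k < n)%N -> idirs f h k = Some c ->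
   exists j : 'I_d.+1, D j = Some (inord k, c) /\ nth 0%N s j = k.
  move=> k c kn hk.
  have ks : k \in s by rewrite mem_filter hk mem_iota add0n kn.
  have ilt : (index k s < d.+1)%N by rewrite ltnS; apply: leq_trans ss; apply: ltnW; rewrite index_mem.
  exists (Ordinal ilt); rewrite ffunE /= index_mem ks nth_index // hk.
  by split.
exists D => k; rewrite sz => kn; rewrite /edir.
case hk : (idirs f h k) => [c|].
  have [j [Dj nj]] := Hin k c kn hk.
  case: c hk Dj => hk Dj.
    case: existsP => //; case; exists j; rewrite Dj /= inordK ?eqxx //.
    by rewrite ltnS ltnW.
  case: existsP => [[j' ]|_].
    case Dj' : (D j') => [p|] //; have [p1 p2 _ _] := Hs j' p Dj'.
    case/andP => /eqP pk pb; move: p2; rewrite pb p1 in pk *; rewrite pk hk //.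
  case: existsP => //; case; exists j; rewrite Dj /= inordK ?eqxx //.
  by rewrite ltnS ltnW.
case: existsP => [[j']|_].
  case Dj' : (D j') => [p|] //; have [p1 _ p3 _] := Hs j' p Dj'.
  by case/andP => /eqP pk _; move: p3; rewrite -p1 pk hk.
case: existsP => [[j']|_] //.
case Dj' : (D j') => [p|] //; have [p1 _ p3 _] := Hs j' p Dj'.
by case/andP => /eqP pk _; move: p3; rewrite -p1 pk hk.
Qed.


Lemma final_ub h : (forall g, F g -> forall x, 0 <= g x <= 1) -> size h = n ->
  consP (fun h1 e => e.1.2 = sigma h1 e.1.1) h ->
  (regret F h <= (ln (#|{: E}|%:R) + c1 * n%:R + c2 * d%:R)%:E)%E.
Proof.
move=> hF01 sz hc; apply: regret_ub; first exact: player_eq.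
move=> f Ff; have [D HD] := cover Ff (hF01 f Ff) sz.
apply: le_trans (expert_bound Ff (hF01 f Ff) HD); rewrite lee_fin sz.
have hWS : ln (W D h) <= ln (S h) by rewrite ler_ln ?posrE ?W_gt0 ?S_gt0 // W_le_S.
have hm : ((mist f h)%:R <= d%:R :> R) by rewrite ler_nat; apply: mist_le => //; apply: hF01.
have := c2_ge0; nra.
Qed.

Lemma minimax_ub : (forall g, F g -> forall x, 0 <= g x <= 1) ->
  (minimax_regret F n <= (ln (#|{: E}|%:R) + c1 * n%:R + c2 * d%:R)%:E)%E.
Proof.
move=> hF01; apply: (@game_ub _ _ _ sigma).
- by move=> h x; have := sigma_bnd h x; have E0 := eps0; have E1 := eps1; lra.
- by move=> [|? ?] ? ?.
- by move=> h' sz hc; apply: final_ub.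
Qed.

Lemma cardE : #|{: E}| = ((n.+1 * 2).+1 ^ d.+1)%N.
Proof. by rewrite card_ffun card_option card_prod !card_ord card_bool. Qed.

End SOA.

Lemma round0 (R : realType) (yh v : R) : 0 <= yh <= 1 -> 0 <= v <= 1 ->
  (logloss v (yh <= v)%R <= logloss yh (yh <= v)%R)%E.
Proof.
move=> /andP[y0 y1] /andP[v0 v1]; rewrite /logloss.
case: (leP yh v) => [yv|vy] /=.
  case: (boolP (yh == 0)) => [_|yn0]; first by rewrite leey.
  case: (boolP (v == 0)) => [/eqP vz|vn0].
    have : yh = 0 by rewrite vz in yv; lra.
    by move/eqP; rewrite (negPf yn0).
  have yp : 0 < yh by rewrite lt_neqAle eq_sym yn0.
  by rewrite lee_fin lerN2 ler_ln ?posrE //; lra.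
case: (boolP (yh == 1)) => [_|yn1]; first by rewrite leey.
case: (boolP (v == 1)) => [/eqP v1'|vn1]; first by exfalso; rewrite v1' in vy; lra.
have yp : 0 < 1 - yh by rewrite subr_gt0 lt_neqAle yn1.
by rewrite lee_fin lerN2 ler_ln ?posrE //; lra.
Qed.

Lemma V_nonneg (R : realType) (X : Type) (F : set (X -> R)) (x0 : X) f0 :
  F f0 -> (forall g, F g -> forall x, 0 <= g x <= 1) ->
  forall n, (0 <= minimax_regret F n)%E.
Proof.
move=> Ff0 hF01 n.
apply: (@game_lb _ _ F (fun _ => x0) (fun _ yh => yh <= f0 x0) 0%E n [::]).
  by move=> [|? ?] ? ?.
move=> h' _ hc; apply: (@regret_lb _ _ F h' 0 f0 hF01 Ff0).
  by move=> h1 e h2 /hc [].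
rewrite add0e; apply: lee_sum_hist => h1 e h2 /hc [ex ey e01].
by rewrite ex ey; apply: round0 => //; apply: hF01.
Qed.

Lemma arith1 (R : realType) (t M n : R) : 0 < M -> t * M = n -> 8 * M <= t -> 1 <= n ->
  2 * n + 3 <= 1 + t ^+ 2 / 2.
Proof.
move=> M0 tM ht n1.
have t0 : 0 <= t by lra.
have : 8 * M * t <= t * t by apply: ler_wpM2r.
rewrite expr2; lra.
Qed.

Lemma ub_rate (R : realType) (X : Type) (F : set (X -> R)) (x0 : X) f0 :
  F f0 -> (forall g, F g -> forall x, 0 <= g x <= 1) ->
  (forall b : R, 0 < b -> (seq_fat F b < +oo)%E) ->
  forall eta : R, 0 < eta -> exists N, forall n, (N <= n)%N -> (0 < n)%N ->
  exists v : R, minimax_regret F n = v%:E /\ 0 <= v /\ v <= eta * n%:R.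
Proof.
move=> Ff0 hF01 Hfin eta eta0.
pose a := expR (- (eta / 3)).
have a0 : 0 < a by apply: expR_gt0.
have a1 : a < 1 by rewrite /a expR_lt1; lra.
pose eps := (1 - a) / 4.
have eps0 : 0 < eps by rewrite /eps; lra.
have eps1 : 4 * eps <= 1 by rewrite /eps; lra.
have hc1 : - ln (1 - 2 * eps) <= eta / 3.
  have : ln a <= ln (1 - 2 * eps) by rewrite ler_ln ?posrE /eps; lra.
  rewrite /a expRK; lra.
pose K := Num.Def.archi_bound (2 / eps).
have hK : 2 / eps < K%:R by apply: archi_boundP; apply: ltW; apply: divr_gt0.
have Kp : 0 < (K%:R : R) by apply: lt_trans hK; apply: divr_gt0.
have K0 : (0 < K)%N by rewrite -(ltr0n R).
have hbe : 2 / K%:R <= eps.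
  rewrite ler_pdivrMr //; move: hK; rewrite ltr_pdivrMr // => hK; lra.
have bpos : 0 < 2 / (K%:R : R) by apply: divr_gt0.
have [d hd] := fat_fin (Hfin _ bpos).
pose c2 := - ln eps.
have c2g : 0 <= c2 by rewrite /c2 oppr_ge0; apply: ln_le0; lra.
pose M := 3 * (d.+1)%:R / eta.
have d0 : 0 < (d.+1)%:R :> R by rewrite ltr0n.
have M0 : 0 < M by rewrite /M; apply: divr_gt0 => //; apply: mulr_gt0 => //; lra.
pose A := 8 * M ^+ 2 + 3 * c2 * d%:R / eta + 1.
have B0 : 0 <= 3 * c2 * d%:R / eta by apply: divr_ge0; [apply: mulr_ge0; [apply: mulr_ge0 => //; lra|] | apply: ltW].
have A0 : 0 <= A by rewrite /A; have := sqr_ge0 M; lra.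
exists (Num.Def.archi_bound A) => n hn n0.
have hnA : A < n%:R by apply: lt_le_trans (archi_boundP A0) _; rewrite ler_nat.
have hub := minimax_ub x0 K0 hd n eps0 eps1 hbe hF01.
have hlb := V_nonneg x0 Ff0 hF01 n.
move: hub hlb; case: (minimax_regret F n) => [v| |] //= hub hlb.
exists v; split => //; split; first by rewrite -lee_fin.
move: hub; rewrite lee_fin cardE natrX lnXn; last by rewrite ltr0n.
have hN : ((n.+1 * 2).+1)%:R = 2 * n%:R + 3 :> R.
  by rewrite -natr1 natrM -natr1; ring.
rewrite hN.
pose L := ln (2 * n%:R + 3 : R).
have n1 : 1 <= n%:R :> R by rewrite ler1n.
have hL : L <= n%:R / M.
  have t0 : 0 <= n%:R / M by rewrite divr_ge0 // ltW.
  pose t := n%:R / M.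
  have tM : t * M = n%:R by rewrite /t divfK // gt_eqF.
  have ht : 8 * M <= t.
    have : (8 * M) * M <= t * M.
      rewrite tM; apply: ltW; apply: le_lt_trans hnA.
      rewrite /A expr2 -mulrA -addrA lerDl; lra.
    by rewrite ler_pM2r.
  have he := expR_ge1Dxn 1 t0.
  have p3 : 0 < 2 * n%:R + 3 :> R by lra.
  rewrite /L -[Z in _ <= Z]expRK ler_ln ?posrE ?expR_gt0 //.
  apply: le_trans he; rewrite -/t (_ : (2`!)%:R = 2 :> R) //.
  exact: arith1 M0 tM ht n1.
have f1 : L *+ d.+1 <= eta * n%:R / 3.
  rewrite -[L *+ _]mulr_natr; have := ler_wpM2r (ltW d0) hL => h1; apply: (le_trans h1).
  rewrite /M le_eqVlt; apply/orP; left; apply/eqP; field.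
  by apply/andP; split; [lra| rewrite gt_eqF].
have f2 : c2 * d%:R <= eta * n%:R / 3.
  have : 3 * c2 * d%:R / eta <= n%:R by move: hnA; rewrite /A; have := sqr_ge0 M; lra.
  by rewrite ler_pdivrMr // => ?; lra.
have f3 : - ln (1 - 2 * eps) * n%:R <= eta / 3 * n%:R.
  by apply: ler_wpM2r => //; apply: ler0n.
rewrite -/L -/c2; lra.
Qed.

Unset Implicit Arguments.

Theorem theorem3 (R : realType) (X : Type) (F : set (X -> R))
  (hX : inhabited X) (hF : F !=set0)
  (hF01 : forall f, F f -> forall x, 0 <= f x <= 1) :
  ((fun n : nat => ((n%:R)^-1)%:E * minimax_regret F n)%E @ \oo --> 0%:E)
  <-> (forall beta : R, 0 < beta -> (seq_fat F beta < +oo)%E).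
Proof.
case: hX => x0; case: hF => f0 Ff0.
split.
- move=> Hcvg beta beta0; apply: contrapT => Hinf.
  have Hlb := fat_lb x0 beta0 hF01 (fat_inf Hinf).
  have b2 : 0 < beta / 2 by apply: divr_gt0.
  have c0 : 0 < ln (1 + beta / 2) by apply: ln_gt0; lra.
  have [fin cv] := (fine_cvgP _ _).1 Hcvg.
  have := (cvgrPdist_lt _ _).1 cv _ c0.
  case: fin => N1 _ H1; case => N2 _ H2.
  pose n := maxn (maxn N1 N2) 1.
  have hn1 : (N1 <= n)%N by rewrite /n !leq_max leqnn.
  have hn2 : (N2 <= n)%N by rewrite /n !leq_max leqnn orbT.
  have n0 : (0 < n)%N by rewrite /n !leq_max orbT.
  have np : 0 < n%:R :> R by rewrite ltr0n.
  have h1 := H1 n hn1; have h2 := H2 n hn2; rewrite /= in h1 h2.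
  move: (Hlb n) h2 h1.
  case: (minimax_regret F n) => [v| |] //=.
  + rewrite lee_fin => hv; rewrite -EFinM /= sub0r normrN => hd _.
    have : ln (1 + beta / 2) <= n%:R^-1 * v.
      by rewrite [_ * v]mulrC ler_pdivlMr // mulrC.
    have := ler_norm (n%:R^-1 * v); lra.
  + by move=> _ _; rewrite mulry gtr0_sg ?invr_gt0 // mul1e.
- move=> Hfin; apply/fine_cvgP; split.
  + have [N HN] := ub_rate x0 Ff0 hF01 Hfin ltr01.
    exists (maxn N 1) => // n /= hn.
    have [v [-> _]] := HN n (leq_trans (leq_maxl _ _) hn) (leq_trans (leq_maxr _ _) hn).
    by rewrite -EFinM.
  apply/cvgrPdist_le => eta eta0.
  have [N HN] := ub_rate x0 Ff0 hF01 Hfin eta0.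
  exists (maxn N 1) => // n /= hn.
  have n0 : (0 < n)%N := leq_trans (leq_maxr _ _) hn.
  have np : 0 < n%:R :> R by rewrite ltr0n.
  have [v [-> [v0 hv]]] := HN n (leq_trans (leq_maxl _ _) hn) n0.
  rewrite -EFinM /= sub0r normrN ger0_norm; last by apply: mulr_ge0 => //; rewrite invr_ge0 ltW.
  by rewrite [_ * v]mulrC ler_pdivrMr // mulrC.
Qed.
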